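(* Let $C\in\mathbb{N}$, $\mathbf{c}\in\mathbb{R}^C$, $\mathbf{n}\in\mathbb{N}^C$, $\boldsymbol{\mu}\in\mathbb{R}^C$, and let $$\mathrm{sb}(\theta;\mathbf{c},\mathbf{n},\boldsymbol{\mu})=\frac{1}{B}\sum_{i=1}^C c_i\cos(n_i(\theta-\mu_i))+\frac{A}{B},\quad A=\sum_{i=1}^C|c_i|,\quad B=2\pi\Big(\sum_{i=1}^C|c_i|+\sum_{i:n_i=0}c_i\Big),$$ be the spectrally bounded probability density on angles $\theta\in[-\pi,\pi)$ (identified with the unit circle $\mathbb{S}^1$ with geodesic distance). Consider a unit circle geometric graph with $N$ nodes sampled i.i.d. according to this angular density and constant neighborhood radius $\alpha$ (two nodes adjacent iff their geodesic distance is at most $\alpha$). Then the expected degree of a node at angle $\theta$ (i.e. $N$ times the probability under this density of the geodesic ball of radius $\alpha$ about $\theta$) is $$\deg(\theta)=\frac{2N}{B}\Big(\sum_{i:n_i\ne0}\frac{c_i}{n_i}\cos(n_i(\theta-\mu_i))\sin(n_i\alpha)+\Big(\sum_{i:n_i=0}c_i+A\Big)\alpha\Big),$$ and the expected average degree of the graph (the expectation of $\deg(\theta)$ for $\theta$ distributed with density $\mathrm{sb}$) is $$\mathbb{E}[\deg(\theta)]=\frac{2\pi N\alpha}{B^2}\Big(\sum_{i:n_i\ne0}\ \sum_{j:n_j=n_i}c_ic_j\cos(n_i(\mu_i-\mu_j))\frac{\sin(n_i\alpha)}{n_i\alpha}+2\Big(\sum_{i:n_i=0}c_i+A\Big)^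2\Big).$$
   Context: Here $\mathbb{N}$ includes $0$ (the indices with $n_i=0$ contribute constant terms). The function $\mathrm{sb}$ is a continuous, $2\pi$-periodic probability density. *)

(* Defs.v *)
From Stdlib Require Import Reals Lra List.
From Coquelicot Require Import Coquelicot.
Open Scope R_scope.

(* finite sum over indices i = 0 .. C-1 (the paper's i = 1 .. C) *)
Definition sumC (C : nat) (f : nat -> R) : R :=
  fold_right Rplus 0 (map f (seq 0 C)).

Definition sbA (C : nat) (c : nat -> R) : R := sumC C (fun i => Rabs (c i)).

Definition sbS0 (C : nat) (c : nat -> R) (n : nat -> nat) : R :=
  sumC C (fun i => if Nat.eqb (n i) 0 then c i else 0).

Definition sbB (C : nat) (c : nat -> R) (n : nat -> nat) : R :=
  2 * PI * (sbA C c + sbS0 C c n).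

Definition sb (C : nat) (c : nat -> R) (n : nat -> nat) (mu : nat -> R)
  (theta : R) : R :=
  / sbB C c n * sumC C (fun i => c i * cos (INR (n i) * (theta - mu i)))
  + sbA C c / sbB C c n.

Definition circ_dist (x y : R) : R :=
  Rmin (Rabs (x - y)) (2 * PI - Rabs (x - y)).

Definition exp_deg (N : nat) (alpha : R) (C : nat) (c : nat -> R)
  (n : nat -> nat) (mu : nat -> R) (theta : R) : R :=
  INR N * RInt (fun phi => if Rle_dec (circ_dist theta phi) alpha
                           then sb C c n mu phi else 0) (- PI) PI.

Definition exp_avg_deg (N : nat) (alpha : R) (C : nat) (c : nat -> R)
  (n : nat -> nat) (mu : nat -> R) : R :=
  RInt (fun theta => exp_deg N alpha C c n mu theta * sb C c n mu theta)
       (- PI) PI.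

(* Main.v *)
Require Import Defs.
From Stdlib Require Import Reals List.
From Stdlib Require Import Lra Lia ZArith.
From Coquelicot Require Import Coquelicot.
Open Scope R_scope.

Ltac toR := match goal with |- @eq _ ?a ?b => change (@eq R a b) end.

Lemma isR (f g : R -> R) a b l l' : is_RInt f a b l -> (forall x, f x = g x) -> l = l' -> is_RInt g a b l'.
Proof. intros H E ->. apply is_RInt_ext with f; auto. Qed.

Lemma sumC_plus C f g : sumC C (fun i => f i + g i) = sumC C f + sumC C g.
Proof. unfold sumC; induction (seq 0 C); simpl; lra. Qed.
Lemma sumC_scal C a f : sumC C (fun i => a * f i) = a * sumC C f.
Proof. unfold sumC; induction (seq 0 C); simpl; lra. Qed.
Lemma sumC_ext C f g : (forall i, f i = g i) -> sumC C f = sumC C g.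
Proof. intro H; unfold sumC; induction (seq 0 C); simpl; rewrite ?H; lra. Qed.
Lemma sumC_zero C : sumC C (fun _ => 0) = 0.
Proof. unfold sumC; induction (seq 0 C); simpl; lra. Qed.
Lemma sumC_mul C f g : sumC C f * sumC C g = sumC C (fun i => sumC C (fun j => f i * g j)).
Proof.
  transitivity (sumC C (fun i => f i * sumC C g)).
  - unfold sumC at 1 3; induction (seq 0 C); simpl; lra.
  - apply sumC_ext; intro i. rewrite <- sumC_scal. reflexivity.
Qed.

Lemma is_RInt_sumC C (f : nat -> R -> R) v a b :
  (forall i, is_RInt (f i) a b (v i)) ->
  is_RInt (fun x => sumC C (fun i => f i x)) a b (sumC C v).
Proof.
  intro H; unfold sumC; induction (seq 0 C) as [|i l IH]; simpl.
  - eapply isR. apply (is_RInt_const a b 0). reflexivity. simpl. change (scal (b-a) 0) with ((b-a)*0). ring.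
  - eapply isR. apply (is_RInt_plus _ _ _ _ _ _ (H i) IH). reflexivity. reflexivity.
Qed.

Lemma sin_per n u : sin (INR n * (u + 2 * PI)) = sin (INR n * u).
Proof. replace (INR n * (u + 2*PI)) with (INR n * u + 2 * INR n * PI) by ring. apply sin_period. Qed.

Lemma T1 n m a b : n <> 0%nat ->
  is_RInt (fun x => cos (INR n * (x - m))) a b ((sin (INR n * (b - m)) - sin (INR n * (a - m))) / INR n).
Proof.
  intro Hn. assert (INR n <> 0) by (apply not_0_INR; auto).
  eapply isR.
  apply (is_RInt_derive (fun x => sin (INR n * (x - m)) / INR n) (fun x => cos (INR n * (x - m)))).
  - intros x _. auto_derive. auto. unfold Rminus. field. auto.
  - intros x _. apply (ex_derive_continuous (fun x => cos (INR n * (x - m)))). auto_derive. auto.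
  - reflexivity.
  - simpl. change (minus ?x ?y) with (x - y). field. auto.
Qed.

Lemma Tk (k : Z) d :
  is_RInt (fun x => cos (IZR k * x + d)) (-PI) PI (if Z.eqb k 0 then 2 * PI * cos d else 0).
Proof.
  destruct (Z.eqb_spec k 0) as [->|Hk].
  - eapply isR. apply (is_RInt_const (-PI) PI (cos d)). intro x; simpl IZR; rewrite Rmult_0_l, Rplus_0_l; reflexivity.
    apply (@eq_trans R _ ((PI - - PI) * cos d)); [reflexivity| ring].
  - assert (IZR k <> 0) by (apply not_0_IZR; auto).
    eapply isR.
    apply (is_RInt_derive (fun x => sin (IZR k * x + d) / IZR k) (fun x => cos (IZR k * x + d))).
    + intros x _. auto_derive. auto. field. auto.
    + intros x _. apply (ex_derive_continuous (fun x => cos (IZR k * x + d))). auto_derive. auto.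
    + reflexivity.
    + toR. change (minus ?x ?y) with (x - y).
      assert (sin (IZR k * PI) = 0) by (apply sin_eq_0_1; exists k; ring).
      replace (IZR k * - PI + d) with (d - IZR k * PI) by ring.
      rewrite sin_plus, sin_minus. rewrite (Rplus_comm). rewrite H0. field. auto.
Qed.

Lemma Tprod n m a b : n <> 0%nat ->
  is_RInt (fun x => cos (INR n * (x - a)) * cos (INR m * (x - b))) (-PI) PI
    (if Nat.eqb m n then PI * cos (INR n * (a - b)) else 0).
Proof.
  intro Hn.
  set (k1 := (Z.of_nat n - Z.of_nat m)%Z). set (k2 := (Z.of_nat n + Z.of_nat m)%Z).
  set (d1 := - (INR n * a) + INR m * b). set (d2 := - (INR n * a) - INR m * b).
  assert (E1 : IZR k1 = INR n - INR m) by (unfold k1; rewrite minus_IZR, <- !INR_IZR_INZ; ring).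
  assert (E2 : IZR k2 = INR n + INR m) by (unfold k2; rewrite plus_IZR, <- !INR_IZR_INZ; ring).
  eapply isR.
  apply (is_RInt_scal _ _ _ (/2) _ (is_RInt_plus _ _ _ _ _ _ (Tk k1 d1) (Tk k2 d2))).
  - intro x. simpl. change (scal ?x ?y) with (x * y). change (plus ?x ?y) with (x + y).
    rewrite E1, E2.
    replace ((INR n - INR m) * x + d1) with (INR n * (x - a) - INR m * (x - b)) by (unfold d1; ring).
    replace ((INR n + INR m) * x + d2) with (INR n * (x - a) + INR m * (x - b)) by (unfold d2; ring).
    rewrite cos_minus, cos_plus. field.
  - toR. change (scal ?x ?y) with (x * y). change (plus ?x ?y) with (x + y).
    assert (k2 <> 0%Z) by (unfold k2; lia).
    rewrite (proj2 (Z.eqb_neq _ _) H).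
    destruct (Nat.eqb_spec m n) as [->|Hmn].
    + replace k1 with 0%Z by (unfold k1; lia). simpl Z.eqb. cbv iota.
      unfold d1. replace (- (INR n * a) + INR n * b) with (- (INR n * (a - b))) by ring.
      rewrite cos_neg. field.
    + assert (k1 <> 0%Z) by (unfold k1; lia). rewrite (proj2 (Z.eqb_neq _ _) H0). ring.
Qed.

Definition vterm (c : nat -> R) (n : nat -> nat) (mu : nat -> R) a b i :=
  if Nat.eqb (n i) 0 then c i * (b - a)
  else c i * ((sin (INR (n i) * (b - mu i)) - sin (INR (n i) * (a - mu i))) / INR (n i)).
Definition V C c n mu a b :=
  / sbB C c n * sumC C (vterm c n mu a b) + sbA C c / sbB C c n * (b - a).

Lemma sb_RInt C c n mu a b : is_RInt (sb C c n mu) a b (V C c n mu a b).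
Proof.
  assert (H : forall i, is_RInt (fun x => c i * cos (INR (n i) * (x - mu i))) a b (vterm c n mu a b i)).
  { intro i. unfold vterm. destruct (Nat.eqb_spec (n i) 0) as [E|E].
    - eapply isR. apply (is_RInt_const a b (c i)).
      + intro x. rewrite E. simpl INR. rewrite Rmult_0_l, cos_0. ring.
      + toR. change (scal ?x ?y) with (x * y). ring.
    - eapply isR. apply (is_RInt_scal _ _ _ (c i) _ (T1 (n i) (mu i) a b E)).
      + reflexivity.
      + reflexivity. }
  eapply isR.
  apply (is_RInt_plus _ _ _ _ _ _ (is_RInt_scal _ _ _ (/ sbB C c n) _ (is_RInt_sumC C _ _ a b H))
           (is_RInt_const a b (sbA C c / sbB C c n))).
  - intro x. reflexivity.
  - unfold V. toR. change (scal ?x ?y) with (x * y). change (plus ?x ?y) with (x + y). ring.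
Qed.

Lemma V_B C c n mu x y : V C c n mu (-PI) x + V C c n mu (y + 2 * PI) PI = V C c n mu y x.
Proof.
  unfold V. assert (E : sumC C (vterm c n mu (-PI) x) + sumC C (vterm c n mu (y + 2 * PI) PI)
     = sumC C (vterm c n mu y x)).
  { rewrite <- sumC_plus. apply sumC_ext. intro i. unfold vterm.
    destruct (Nat.eqb_spec (n i) 0) as [Z|Z]. ring.
    assert (INR (n i) <> 0) by (apply not_0_INR; auto).
    replace (PI - mu i) with ((-PI - mu i) + 2 * PI) by ring.
    replace (y + 2 * PI - mu i) with ((y - mu i) + 2 * PI) by ring.
    rewrite !sin_per. field. auto. }
  rewrite <- E. ring.
Qed.

Lemma V_C C c n mu x y : V C c n mu (-PI) (x - 2 * PI) + V C c n mu y PI = V C c n mu y x.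
Proof.
  unfold V. assert (E : sumC C (vterm c n mu (-PI) (x - 2 * PI)) + sumC C (vterm c n mu y PI)
     = sumC C (vterm c n mu y x)).
  { rewrite <- sumC_plus. apply sumC_ext. intro i. unfold vterm.
    destruct (Nat.eqb_spec (n i) 0) as [Z|Z]. ring.
    assert (INR (n i) <> 0) by (apply not_0_INR; auto).
    replace (PI - mu i) with ((-PI - mu i) + 2 * PI) by ring.
    replace (x - mu i) with ((x - 2 * PI - mu i) + 2 * PI) by ring.
    rewrite !sin_per. field. auto. }
  rewrite <- E. ring.
Qed.

Ltac cd_tac := unfold circ_dist, Rmin in *; destruct (Rle_dec _ _); unfold Rabs in *;
  destruct (Rcase_abs _); lra.

Section Deg.
Variables (C : nat) (c : nat -> R) (n : nat -> nat) (mu : nat -> R) (alpha th : R).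
Let g := fun phi => if Rle_dec (circ_dist th phi) alpha then sb C c n mu phi else 0.

Lemma piece_in a b : a <= b -> (forall phi, a < phi < b -> circ_dist th phi <= alpha) ->
  is_RInt g a b (V C c n mu a b).
Proof.
  intros Hab H. apply is_RInt_ext with (sb C c n mu); [|apply sb_RInt].
  intros x Hx. rewrite Rmin_left, Rmax_right in Hx by lra. unfold g.
  destruct (Rle_dec _ _) as [_|F]; [reflexivity| elim F; auto].
Qed.

Lemma piece_out a b : a <= b -> (forall phi, a < phi < b -> ~ circ_dist th phi <= alpha) ->
  is_RInt g a b 0.
Proof.
  intros Hab H. apply is_RInt_ext with (fun _ => 0).
  - intros x Hx. rewrite Rmin_left, Rmax_right in Hx by lra. unfold g.
    destruct (Rle_dec _ _) as [T|_]; [elim (H x Hx T)| reflexivity].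
  - eapply isR. apply (is_RInt_const a b 0). reflexivity. toR. change (scal ?x ?y) with (x * y). ring.
Qed.

Lemma g_RInt : -PI <= th <= PI -> 0 < alpha <= PI ->
  is_RInt g (-PI) PI (V C c n mu (th - alpha) (th + alpha)).
Proof.
  intros Hth Ha. pose proof PI_RGT_0.
  destruct (Rle_dec (-PI) (th - alpha)) as [H1|H1]; [destruct (Rle_dec (th + alpha) PI) as [H2|H2]|].
  - eapply isR. eapply is_RInt_Chasles. eapply is_RInt_Chasles.
    apply (piece_out (-PI) (th - alpha)). lra. intros; intro; cd_tac.
    apply (piece_in (th - alpha) (th + alpha)). lra. intros; cd_tac.
    apply (piece_out (th + alpha) PI). lra. intros; intro; cd_tac.
    reflexivity. toR. repeat change (plus ?x ?y) with (x + y). ring.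
  - eapply isR. eapply is_RInt_Chasles. eapply is_RInt_Chasles.
    apply (piece_in (-PI) (th + alpha - 2 * PI)). lra. intros; cd_tac.
    apply (piece_out (th + alpha - 2 * PI) (th - alpha)). lra. intros; intro; cd_tac.
    apply (piece_in (th - alpha) PI). lra. intros; cd_tac.
    reflexivity. toR. repeat change (plus ?x ?y) with (x + y). rewrite Rplus_0_r. apply V_C.
  - eapply isR. eapply is_RInt_Chasles. eapply is_RInt_Chasles.
    apply (piece_in (-PI) (th + alpha)). lra. intros; cd_tac.
    apply (piece_out (th + alpha) (th - alpha + 2 * PI)). lra. intros; intro; cd_tac.
    apply (piece_in (th - alpha + 2 * PI) PI). lra. intros; cd_tac.
    reflexivity. toR. repeat change (plus ?x ?y) with (x + y). rewrite Rplus_0_r. apply V_B.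
Qed.
End Deg.

Lemma deg_formula C c n mu N alpha th : 0 < sbB C c n -> 0 < alpha <= PI -> -PI <= th <= PI ->
  exp_deg N alpha C c n mu th =
     2 * INR N / sbB C c n *
       (sumC C (fun i => if Nat.eqb (n i) 0 then 0 else
                  c i / INR (n i) * cos (INR (n i) * (th - mu i))
                  * sin (INR (n i) * alpha))
        + (sbS0 C c n + sbA C c) * alpha).
Proof.
  intros HB Ha Hth. unfold exp_deg.
  replace (RInt _ (-PI) PI) with (V C c n mu (th - alpha) (th + alpha))
    by (symmetry; apply is_RInt_unique; apply g_RInt; auto).
  assert (E : sumC C (vterm c n mu (th - alpha) (th + alpha)) =
     2 * sumC C (fun i => if Nat.eqb (n i) 0 then 0 else
                  c i / INR (n i) * cos (INR (n i) * (th - mu i))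
                  * sin (INR (n i) * alpha)) + 2 * alpha * sbS0 C c n).
  { unfold sbS0. rewrite <- !sumC_scal, <- sumC_plus. apply sumC_ext. intro i. unfold vterm.
    destruct (Nat.eqb_spec (n i) 0) as [Z|Z]. ring.
    assert (INR (n i) <> 0) by (apply not_0_INR; auto).
    replace (INR (n i) * (th + alpha - mu i)) with (INR (n i) * (th - mu i) + INR (n i) * alpha) by ring.
    replace (INR (n i) * (th - alpha - mu i)) with (INR (n i) * (th - mu i) - INR (n i) * alpha) by ring.
    rewrite sin_plus, sin_minus. field. auto. }
  unfold V. rewrite E. field. lra.
Qed.

Definition pc (c : nat -> R) (n : nat -> nat) alpha i :=
  if Nat.eqb (n i) 0 then 0 else c i / INR (n i) * sin (INR (n i) * alpha).
Definition qc (c : nat -> R) (n : nat -> nat) i := if Nat.eqb (n i) 0 then 0 else c i.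
Definition rc (n : nat -> nat) (mu : nat -> R) i j :=
  if Nat.eqb (n j) (n i) then PI * cos (INR (n i) * (mu i - mu j)) else 0.

Lemma Z0 (a : R) (k : nat) m : (k = 0%nat -> a = 0) ->
  is_RInt (fun x => a * cos (INR k * (x - m))) (-PI) PI 0.
Proof.
  intro H. destruct (Nat.eqb_spec k 0) as [Z|Z].
  - rewrite (H Z). eapply isR. apply (is_RInt_const (-PI) PI 0). intro; cbv beta; ring.
    toR. change (scal ?x ?y) with (x * y). ring.
  - assert (INR k <> 0) by (apply not_0_INR; auto).
    eapply isR. apply (is_RInt_scal _ _ _ a _ (T1 k m (-PI) PI Z)). reflexivity.
    toR. change (scal ?x ?y) with (x * y).
    replace (PI - m) with ((-PI - m) + 2 * PI) by ring. rewrite sin_per. field. auto.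
Qed.

Lemma sb_eq C c n mu th : sb C c n mu th =
  / sbB C c n * (sumC C (fun j => qc c n j * cos (INR (n j) * (th - mu j))) + (sbS0 C c n + sbA C c)).
Proof.
  unfold sb. assert (E : sumC C (fun i => c i * cos (INR (n i) * (th - mu i))) =
    sumC C (fun j => qc c n j * cos (INR (n j) * (th - mu j))) + sbS0 C c n).
  { unfold sbS0. rewrite <- sumC_plus. apply sumC_ext. intro i. unfold qc.
    destruct (Nat.eqb_spec (n i) 0) as [Z|Z]. rewrite Z. simpl INR. rewrite Rmult_0_l, cos_0. ring. ring. }
  rewrite E. unfold Rdiv. ring.
Qed.

Lemma S_eq C c n mu alpha : 0 < alpha ->
  sumC C (fun i => sumC C (fun j => pc c n alpha i * qc c n j * rc n mu i j)) =
  PI * alpha * sumC C (fun i => if Nat.eqb (n i) 0 then 0 else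
          sumC C (fun j => if Nat.eqb (n j) (n i) then
              c i * c j * cos (INR (n i) * (mu i - mu j))
              * (sin (INR (n i) * alpha) / (INR (n i) * alpha))
            else 0)).
Proof.
  intro Ha. rewrite <- sumC_scal. apply sumC_ext. intro i. unfold pc.
  destruct (Nat.eqb_spec (n i) 0) as [Z|Z].
  - transitivity (sumC C (fun _ => 0)); [apply sumC_ext; intro; ring | rewrite sumC_zero; ring].
  - rewrite <- sumC_scal. apply sumC_ext; intro j. unfold qc, rc.
    assert (INR (n i) <> 0) by (apply not_0_INR; auto).
    destruct (Nat.eqb_spec (n j) (n i)) as [E|E].
    + rewrite E. destruct (Nat.eqb_spec (n i) 0) as [Z'|Z']; [contradiction|]. field. split; lra.
    + ring.
Qed.

Lemma avg_formula C c n mu N alpha : 0 < sbB C c n -> 0 < alpha <= PI ->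
  exp_avg_deg N alpha C c n mu =
    2 * PI * INR N * alpha / (sbB C c n) ^ 2 *
      (sumC C (fun i => if Nat.eqb (n i) 0 then 0 else
          sumC C (fun j => if Nat.eqb (n j) (n i) then
              c i * c j * cos (INR (n i) * (mu i - mu j))
              * (sin (INR (n i) * alpha) / (INR (n i) * alpha))
            else 0))
       + 2 * (sbS0 C c n + sbA C c) ^ 2).
Proof.
  intros HB Ha. unfold exp_avg_deg.
  set (B := sbB C c n). set (K := sbS0 C c n + sbA C c).
  set (P := fun th => sumC C (fun i => pc c n alpha i * cos (INR (n i) * (th - mu i)))).
  set (Q := fun th => sumC C (fun j => qc c n j * cos (INR (n j) * (th - mu j)))).
  set (S := sumC C (fun i => sumC C (fun j => pc c n alpha i * qc c n j * rc n mu i j))).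
  assert (I1 : is_RInt (fun th => sumC C (fun i => sumC C (fun j =>
        (pc c n alpha i * cos (INR (n i) * (th - mu i))) * (qc c n j * cos (INR (n j) * (th - mu j))))))
        (-PI) PI S).
  { apply (is_RInt_sumC C (fun i th => sumC C (fun j =>
        (pc c n alpha i * cos (INR (n i) * (th - mu i))) * (qc c n j * cos (INR (n j) * (th - mu j)))))).
    intro i. apply (is_RInt_sumC C (fun j th =>
        (pc c n alpha i * cos (INR (n i) * (th - mu i))) * (qc c n j * cos (INR (n j) * (th - mu j))))).
    intro j. unfold pc. destruct (Nat.eqb_spec (n i) 0) as [Z|Z].
    - eapply isR. apply (is_RInt_const (-PI) PI 0). intro; cbv beta; ring.
      toR. change (scal ?x ?y) with (x * y). ring.
    - eapply isR. apply (is_RInt_scal _ _ _ (c i / INR (n i) * sin (INR (n i) * alpha) * qc c n j) _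
          (Tprod (n i) (n j) (mu i) (mu j) Z)).
      intro; cbv beta. change (scal ?x ?y) with (x * y). ring.
      toR. change (scal ?x ?y) with (x * y). unfold rc. reflexivity. }
  assert (I2 : is_RInt P (-PI) PI 0).
  { rewrite <- (sumC_zero C). apply (is_RInt_sumC C (fun i th => pc c n alpha i * cos (INR (n i) * (th - mu i)))).
    intro i. apply Z0. intro Z. unfold pc. rewrite Z. reflexivity. }
  assert (I3 : is_RInt Q (-PI) PI 0).
  { rewrite <- (sumC_zero C). apply (is_RInt_sumC C (fun i th => qc c n i * cos (INR (n i) * (th - mu i)))).
    intro i. apply Z0. intro Z. unfold qc. rewrite Z. reflexivity. }
  assert (Itot : is_RInt (fun th => (2 * INR N / B * / B) *
        (sumC C (fun i => sumC C (fun j =>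
        (pc c n alpha i * cos (INR (n i) * (th - mu i))) * (qc c n j * cos (INR (n j) * (th - mu j)))))
         + K * P th + K * alpha * Q th + K * K * alpha)) (-PI) PI
        (2 * INR N / B * / B * (S + K * 0 + K * alpha * 0 + (PI - - PI) * (K * K * alpha)))).
  { eapply isR. apply (is_RInt_scal _ _ _ (2 * INR N / B * / B) _
       (is_RInt_plus _ _ _ _ _ _ (is_RInt_plus _ _ _ _ _ _ (is_RInt_plus _ _ _ _ _ _ I1
         (is_RInt_scal _ _ _ K _ I2)) (is_RInt_scal _ _ _ (K * alpha) _ I3))
         (is_RInt_const (-PI) PI (K * K * alpha)))).
    reflexivity. reflexivity. }
  assert (Ext : forall x, Rmin (-PI) PI < x < Rmax (-PI) PI ->
     (fun th => (2 * INR N / B * / B) *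
        (sumC C (fun i => sumC C (fun j =>
        (pc c n alpha i * cos (INR (n i) * (th - mu i))) * (qc c n j * cos (INR (n j) * (th - mu j)))))
         + K * P th + K * alpha * Q th + K * K * alpha)) x =
     (fun theta => exp_deg N alpha C c n mu theta * sb C c n mu theta) x).
  { intros x Hx. rewrite Rmin_left, Rmax_right in Hx by (pose proof PI_RGT_0; lra). cbv beta.
    rewrite deg_formula by (auto; lra). rewrite sb_eq. fold B K.
    assert (EP : sumC C (fun i => if Nat.eqb (n i) 0 then 0 else
                  c i / INR (n i) * cos (INR (n i) * (x - mu i)) * sin (INR (n i) * alpha)) = P x).
    { unfold P. apply sumC_ext. intro i. unfold pc. destruct (Nat.eqb (n i) 0); ring. }
    rewrite EP. fold (Q x). rewrite <- sumC_mul. unfold P, Q; cbv beta; ring. }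
  rewrite (is_RInt_unique _ _ _ _ (is_RInt_ext _ _ _ _ _ Ext Itot)).
  unfold S. rewrite S_eq by lra. fold K. unfold B. field. lra.
Qed.

Theorem proposition3 (C : nat) (c : nat -> R) (n : nat -> nat) (mu : nat -> R)
  (N : nat) (alpha : R) :
  0 < sbB C c n ->
  0 < alpha <= PI ->
  (forall theta, - PI <= theta < PI ->
     exp_deg N alpha C c n mu theta =
     2 * INR N / sbB C c n *
       (sumC C (fun i => if Nat.eqb (n i) 0 then 0 else
                  c i / INR (n i) * cos (INR (n i) * (theta - mu i))
                  * sin (INR (n i) * alpha))
        + (sbS0 C c n + sbA C c) * alpha)) /\
  exp_avg_deg N alpha C c n mu =
    2 * PI * INR N * alpha / (sbB C c n) ^ 2 *
      (sumC C (fun i => if Nat.eqb (n i) 0 then 0 else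
          sumC C (fun j => if Nat.eqb (n j) (n i) then
              c i * c j * cos (INR (n i) * (mu i - mu j))
              * (sin (INR (n i) * alpha) / (INR (n i) * alpha))
            else 0))
       + 2 * (sbS0 C c n + sbA C c) ^ 2).
Proof.
  intros HB Ha. split.
  - intros th Hth. apply deg_formula; auto; lra.
  - apply avg_formula; auto.
Qed.
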